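(* Let $M$ be a closed manifold and $\phi\in A^1(\mathbb{R}^2,M)$. Then any two dense orbits of $\phi$ are homeomorphic (indeed their isotropy groups coincide).
   Context: $A^1(\mathbb{R}^2,M)$ is the set of actions $\phi:\mathbb{R}^2\times M\to M$ of $\mathbb{R}^2$ on $M$ with $C^1$ infinitesimal generators. The orbit of $p$ is $\mathcal{O}_p=\{\phi(\omega,p):\omega\in\mathbb{R}^2\}$, equipped with the topology making $\omega\mapsto\phi(\omega,p)$ induce a homeomorphism $\mathbb{R}^2/G_p\to\mathcal{O}_p$, where $G_p=\{\omega\in\mathbb{R}^2:\phi(\omega,p)=p\}$ is the isotropy group of $p$. An orbit is dense if it is dense in $M$. *)

(* Defs.v *)
From HB Require Import structures.
From mathcomp Require Import all_boot all_order all_algebra.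
From mathcomp Require Import all_classical all_reals all_analysis.
From mathcomp Require Import Rstruct Rstruct_topology.
From Stdlib Require Import Rdefinitions.

Set Implicit Arguments.
Unset Strict Implicit.
Unset Printing Implicit Defensive.
Import Order.TTheory GRing.Theory Num.Theory.
Import numFieldNormedType.Exports.
Local Open Scope classical_set_scope.
Local Open Scope ring_scope.

Definition basis_vec (n : nat) (i : 'I_n) : 'rV[R]_n := delta_mx 0 i.

Fixpoint Ck (n m : nat) (k : nat) (U : set 'rV[R]_n)
    (f : 'rV[R]_n -> 'rV[R]_m) : Prop :=
  match k with
  | 0 => {in U, continuous f}
  | k'.+1 => (forall (j : 'I_n) (x : 'rV[R]_n), U x -> derivable f x (basis_vec j))
             /\ (forall j : 'I_n, Ck k' U (fun x => 'D_(basis_vec j) f x))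
  end.

Definition smooth_on (n m : nat) (U : set 'rV[R]_n) (f : 'rV[R]_n -> 'rV[R]_m) :=
  forall k, Ck k U f.

Record chart (M : topologicalType) (n : nat) := Chart {
  cdom : set M;
  cmap : M -> 'rV[R]_n;
  cinv : 'rV[R]_n -> M;
  cdom_open : open cdom;
  cimg_open : open (cmap @` cdom);
  cmap_cont : {within cdom, continuous cmap};
  cinv_cont : {within cmap @` cdom, continuous cinv};
  cinv_map : forall x, cdom x -> cinv (cmap x) = x;
}.

Record smooth_atlas (M : topologicalType) (n : nat) := SmoothAtlas {
  atlas : set (chart M n);
  atlas_cover : forall x : M, exists c, atlas c /\ cdom c x;
  atlas_compat : forall c d, atlas c -> atlas d ->
    smooth_on (cmap c @` (cdom c `&` cdom d)) (cmap d \o cinv c);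
}.

(* A closed manifold: compact Hausdorff space with a smooth atlas
   (charts onto open subsets of R^n, so no boundary). *)
Definition closed_manifold (M : topologicalType) (n : nat) (A : smooth_atlas M n) :=
  hausdorff_space M /\ compact [set: M].

Definition R2_action (M : topologicalType) (phi : 'rV[R]_2 -> M -> M) :=
  continuous (fun z : 'rV[R]_2 * M => phi z.1 z.2)
  /\ (forall p, phi 0 p = p)
  /\ (forall a b p, phi (a + b) p = phi a (phi b p)).

(* Local representative, in the chart c, of the i-th infinitesimal generator
   X_i(p) = d/dt phi(t e_i, p) |_{t=0}. *)
Definition gen_local (M : topologicalType) (n : nat) (phi : 'rV[R]_2 -> M -> M)
    (i : 'I_2) (c : chart M n) (y : 'rV[R]_n) : 'rV[R]_n :=
  'D_1 (fun t : R^o => cmap c (phi (t *: basis_vec i) (cinv c y))) 0.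

Definition A1 (M : topologicalType) (n : nat) (A : smooth_atlas M n)
    (phi : 'rV[R]_2 -> M -> M) :=
  R2_action phi /\
  forall (i : 'I_2) (c : chart M n), atlas A c ->
    (forall p, cdom c p ->
       derivable (fun t : R^o => cmap c (phi (t *: basis_vec i) p)) 0 1)
    /\ Ck 1 (cmap c @` cdom c) (gen_local phi i c).

Definition orbit (M : topologicalType) (phi : 'rV[R]_2 -> M -> M) (p : M) : set M :=
  [set phi w p | w in [set: 'rV[R]_2]].

Definition isotropy (M : topologicalType) (phi : 'rV[R]_2 -> M -> M) (p : M)
  : set 'rV[R]_2 := [set w | phi w p = p].

Definition dense_orbit (M : topologicalType) (phi : 'rV[R]_2 -> M -> M) (p : M) :=
  closure (orbit phi p) = [set: M].

(* Main.v *)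
Require Import Defs.
From mathcomp Require Import all_boot all_order all_algebra.
From mathcomp Require Import all_classical all_reals all_analysis.
From mathcomp Require Import Rstruct Rstruct_topology.
From Stdlib Require Import Rdefinitions.

Set Implicit Arguments.
Unset Strict Implicit.
Unset Printing Implicit Defensive.
Import Order.TTheory GRing.Theory Num.Theory.
Local Open Scope classical_set_scope.
Local Open Scope ring_scope.

Lemma fix_all (M : topologicalType) (phi : 'rV[R]_2 -> M -> M) (p : M) (w : 'rV[R]_2) :
  hausdorff_space M -> R2_action phi -> dense_orbit phi p ->
  phi w p = p -> forall x, phi w x = x.
Proof.
move=> hM [cphi [ph0 phD]] dp wp.
have cf : continuous (phi w).
  move=> x.
  have h1 : (w, y) @[y --> x] --> (w, x).
    by apply: (@cvg_pair _ _ _ _ (nbhs w)) => /=; [exact: cvg_cst | exact: cvg_id].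
  exact: (cvg_comp _ _ h1 (cphi (w, x))).
have fixo : forall y, Defs.orbit phi p y -> phi w y = y.
  move=> y [v _ <-]; by rewrite -phD addrC phD wp.
move=> x; apply: esym; apply: hM => A B Ax Bfx.
have pre : nbhs x (phi w @^-1` B) by exact: (cf x B Bfx).
have : closure (Defs.orbit phi p) x by rewrite dp.

move=> /(_ (A `&` phi w @^-1` B) (filterI Ax pre)) [y [oy [Ay By]]].
exists y; split => //; by rewrite -(fixo y oy).
Qed.

Theorem mainTheorem3 (M : topologicalType) (n : nat) (A : smooth_atlas M n)
  (phi : 'rV[R]_2 -> M -> M) :
  closed_manifold A -> A1 A phi ->
  forall p q : M, dense_orbit phi p -> dense_orbit phi q ->
  isotropy phi p = isotropy phi q.
Proof.
move=> [hM _] [act _] p q dp dq.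
rewrite /isotropy; apply/seteqP; split => w /= hw.
- exact: (fix_all hM act dp hw).
- exact: (fix_all hM act dq hw).
Qed.
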